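(* There exists a unique $C^*<0$ such that $u(C^* )=0$, and this $C^*$ is the unique maximizer of $v$ over $(-\infty,B^*]$.
   Context: $\Phi$ is the standard normal distribution function. $B^*\approx0.84$ is the unique positive solution of $\sqrt{2\pi}(1-B^2)e^{B^2/2}\Phi(B)=B$. For $C\le B^*$ define $$v(C):=\frac{1}{\Phi(-C)}\left[(1-(B^* )^2)\Phi(C)-C\frac{e^{-C^2/2}}{\sqrt{2\pi}}\right],$$ $$u(C):=1-(B^* )^2-(1-C^2)\Phi(-C)-\frac{C}{\sqrt{2\pi}}e^{-C^2/2}.$$ *)

(* Defs.v *)
From Stdlib Require Import Reals.
From Coquelicot Require Import Coquelicot.
Open Scope R_scope.

Definition phi_dens (t : R) : R := exp (- t ^ 2 / 2) / sqrt (2 * PI).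

Definition Phi (x : R) : R :=
  RInt_gen phi_dens (Rbar_locally m_infty) (at_point x).

Definition Bstar_eq (B : R) : Prop :=
  sqrt (2 * PI) * (1 - B ^ 2) * exp (B ^ 2 / 2) * Phi B = B.

(* v and u, parameterized by the value Bs of B^* *)
Definition v (Bs C : R) : R :=
  / Phi (- C) * ((1 - Bs ^ 2) * Phi C - C * exp (- C ^ 2 / 2) / sqrt (2 * PI)).

Definition u (Bs C : R) : R :=
  1 - Bs ^ 2 - (1 - C ^ 2) * Phi (- C) - C / sqrt (2 * PI) * exp (- C ^ 2 / 2).

(* Main.v *)
Require Import Defs.
From Stdlib Require Import Reals Lra Psatz.
From Coquelicot Require Import Coquelicot.
Open Scope R_scope.

Definition g (s : R) : R := exp (- s ^ 2 / 2).
Definition G (t : R) : R := RInt g 0 t.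
Definition kk (t x : R) : R := 2 * (exp (- (t ^ 2 * (1 + x ^ 2)) / 2) / (1 + x ^ 2)).
Definition H (t : R) : R := RInt (kk t) 0 1.

Lemma g_cont x : continuous g x.
Proof. apply (ex_derive_continuous (V := R_NormedModule) g). unfold g. auto_derive. easy. Qed.

Lemma ex_RInt_g a b : ex_RInt g a b.
Proof. apply (ex_RInt_continuous (V:=R_CompleteNormedModule)). intros; apply g_cont. Qed.

Lemma G_deriv t : is_derive G t (g t).
Proof.
  unfold G. apply is_derive_RInt with (a := 0).
  - apply filter_forall. intros b. apply (RInt_correct (V:=R_CompleteNormedModule)), ex_RInt_g.
  - apply g_cont.
Qed.

Lemma onepx2 x : 0 < 1 + x ^ 2.
Proof. nra. Qed.

Lemma kk_cont t x : continuous (kk t) x.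
Proof. apply (ex_derive_continuous (V := R_NormedModule) (kk t)). unfold kk. auto_derive. pose proof (onepx2 x). lra. Qed.

Lemma ex_RInt_kk t a b : ex_RInt (kk t) a b.
Proof. apply (ex_RInt_continuous (V:=R_CompleteNormedModule)). intros; apply kk_cont. Qed.

Lemma kk_deriv (x t : R) : is_derive (fun u => kk u t) x (- 2 * x * exp (- (x ^ 2 * (1 + t ^ 2)) / 2)).
Proof.
  unfold kk. auto_derive. pose proof (onepx2 t); lra.
  pose proof (onepx2 t). replace (x * (x * 1) * (1 + t * (t * 1))) with (x ^ 2 * (1 + t ^ 2)) by ring. match goal with |- ?a = ?b => change (@eq R a b) end. change RinvImpl.Rinv with Rinv. unfold Rdiv. field. lra.
Qed.

Lemma c2d_exp f x y : continuity_2d_pt f x y -> continuity_2d_pt (fun u v => exp (f u v)) x y.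
Proof.
  intros Hf. apply continuity_2d_pt_filterlim. apply continuity_2d_pt_filterlim in Hf.
  eapply filterlim_comp. exact Hf.
  apply (ex_derive_continuous (V := R_NormedModule) exp). auto_derive. easy.
Qed.

Lemma D_cont x y : continuity_2d_pt (fun u v => -2 * u * exp (- (u ^ 2 * (1 + v ^ 2)) / 2)) x y.
Proof.
  apply continuity_2d_pt_mult.
  apply continuity_2d_pt_mult. apply continuity_2d_pt_const. apply continuity_2d_pt_id1.
  apply c2d_exp.
  apply continuity_2d_pt_ext with (f := fun u v => (- ((u * u) * (1 + v * v))) * / 2).
  intros; unfold Rdiv; ring.
  apply continuity_2d_pt_mult; [|apply continuity_2d_pt_const].
  apply continuity_2d_pt_opp.
  apply continuity_2d_pt_mult.
  apply continuity_2d_pt_mult; apply continuity_2d_pt_id1.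
  apply continuity_2d_pt_plus. apply continuity_2d_pt_const.
  apply continuity_2d_pt_mult; apply continuity_2d_pt_id2.
Qed.

Lemma Derive_kk u v : Derive (fun z => kk z v) u = -2 * u * exp (- (u ^ 2 * (1 + v ^ 2)) / 2).
Proof. apply is_derive_unique, kk_deriv. Qed.

Lemma int_tg t : RInt (fun s => t * g (t * s)) 0 1 = G t.
Proof.
  unfold G.
  pose proof (RInt_comp_lin g t 0 0 1 (ex_RInt_g _ _)) as E.
  replace (t * 0 + 0) with 0 in E by ring. replace (t * 1 + 0) with t in E by ring.
  rewrite <- E. apply RInt_ext. intros; rewrite Rplus_0_r; reflexivity.
Qed.

Lemma H_deriv t : is_derive H t (-2 * g t * G t).
Proof.
  unfold H.
  assert (Hd := is_derive_RInt_param kk 0 1 t).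
  assert (Hv : RInt (fun s => Derive (fun u => kk u s) t) 0 1 = -2 * g t * G t).
  { rewrite (RInt_ext _ (fun s => (-2 * g t) * (t * g (t * s)))).
    transitivity (scal (-2 * g t) (RInt (fun s => t * g (t * s)) 0 1)).
    rewrite <- RInt_scal. reflexivity.
    apply (ex_RInt_continuous (V:=R_CompleteNormedModule)). intros z _.
    apply (ex_derive_continuous (V := R_NormedModule)). unfold g. auto_derive. easy.
    rewrite int_tg. reflexivity.
    intros s _. rewrite Derive_kk. unfold g.
    replace (- (t ^ 2 * (1 + s ^ 2)) / 2) with (- t ^ 2 / 2 + - (t * s) ^ 2 / 2) by (unfold Rdiv; ring).
    rewrite exp_plus. match goal with |- ?a = ?b => change (@eq R a b) end. ring. }
  rewrite <- Hv. apply Hd.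
  - apply filter_forall. intros x s _. exists (-2 * x * exp (- (x ^ 2 * (1 + s ^ 2)) / 2)). apply kk_deriv.
  - intros s _. apply continuity_2d_pt_ext with (f := fun u v => -2 * u * exp (- (u ^ 2 * (1 + v ^ 2)) / 2)).
    intros; rewrite Derive_kk; reflexivity. apply D_cont.
  - apply filter_forall. intros; apply ex_RInt_kk.
Qed.

Lemma const_deriv0 (f : R -> R) : (forall x, is_derive f x 0) -> forall a b, f a = f b.
Proof.
  intros Hf a b.
  assert (K : forall a b, a < b -> f a = f b).
  { intros a0 b0 Hab. destruct (MVT_cor2 f (fun _ => 0) a0 b0 Hab) as [c [Hc _]].
    intros c _. apply is_derive_Reals, Hf. lra. }
  destruct (Rtotal_order a b) as [h|[h|h]]. now apply K. now subst. symmetry; now apply K.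
Qed.

Lemma G_0 : G 0 = 0.
Proof. unfold G. apply (RInt_point (V:=R_CompleteNormedModule)). Qed.

Lemma H_0 : H 0 = PI / 2.
Proof.
  unfold H.
  assert (E : is_RInt (kk 0) 0 1 (minus (2 * atan 1) (2 * atan 0))).
  { apply (is_RInt_derive (fun x => 2 * atan x)).
    - intros x _. unfold kk. 
      replace (2 * (exp (- (0 ^ 2 * (1 + x ^ 2)) / 2) / (1 + x ^ 2))) with (2 * / (1 + x ^ 2)).
      apply is_derive_scal. apply is_derive_Reals.
      apply derivable_pt_lim_atan.
      replace (- (0 ^ 2 * (1 + x ^ 2)) / 2) with 0 by (unfold Rdiv; ring). rewrite exp_0.
      unfold Rdiv; ring.
    - intros; apply kk_cont. }
  apply (is_RInt_unique (V:=R_CompleteNormedModule)) in E. rewrite E. unfold minus, plus, opp; simpl.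
  rewrite atan_1, atan_0. field.
Qed.

Lemma F_const t : G t ^ 2 + H t = PI / 2.
Proof.
  replace (PI / 2) with (G 0 ^ 2 + H 0) by (rewrite G_0, H_0; ring).
  apply (const_deriv0 (fun t => G t ^ 2 + H t)).
  intros x.
  evar (l : R).
  replace 0 with l.
  apply (is_derive_plus (fun t => G t ^ 2) H).
  apply (is_derive_pow G 2). apply G_deriv. apply H_deriv.
  unfold l. simpl. unfold plus; simpl. ring.
Qed.

Lemma kk_pos t x : 0 < kk t x.
Proof. unfold kk. pose proof (onepx2 x). pose proof (exp_pos (- (t ^ 2 * (1 + x ^ 2)) / 2)).
  apply Rmult_lt_0_compat. lra. apply Rdiv_lt_0_compat; lra. Qed.

Lemma H_pos t : 0 < H t.
Proof. unfold H. apply RInt_gt_0. lra. intros; apply kk_pos. intros; apply kk_cont. Qed.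

Lemma H_le t : H t <= 2 * g t.
Proof.
  unfold H. 
  apply Rle_trans with (RInt (fun _ => 2 * g t) 0 1).
  apply RInt_le. lra. apply ex_RInt_kk. apply ex_RInt_const.
  intros x Hx. unfold kk, g. pose proof (onepx2 x).
  assert (exp (- (t ^ 2 * (1 + x ^ 2)) / 2) <= exp (- t ^ 2 / 2)).
  { assert (0 <= t^2 * x^2) by (apply Rmult_le_pos; apply pow2_ge_0).
    destruct (Req_dec (t^2*x^2) 0) as [e|ne].
    right. f_equal. replace (t ^ 2 * (1 + x ^ 2)) with (t^2 + t^2*x^2) by ring. rewrite e. unfold Rdiv; ring.
    left. apply exp_increasing. lra. }
  assert (exp (- (t ^ 2 * (1 + x ^ 2)) / 2) / (1 + x ^ 2) <= exp (- (t ^ 2 * (1 + x ^ 2)) / 2)).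
  { pose proof (exp_pos (- (t ^ 2 * (1 + x ^ 2)) / 2)). pose proof (pow2_ge_0 x).
    apply Rmult_le_reg_r with (1 + x^2). lra. unfold Rdiv. rewrite Rmult_assoc, Rinv_l, Rmult_1_r by lra. nra. }
  lra.
  rewrite RInt_const. unfold scal; simpl; unfold mult; simpl. lra.
Qed.

Lemma g_even x : g (- x) = g x.
Proof. unfold g. f_equal. unfold Rdiv. ring. Qed.

Lemma G_odd x : G (- x) = - G x.
Proof.
  unfold G.
  pose proof (RInt_comp_lin g (-1) 0 0 x (ex_RInt_g _ _)) as E.
  replace (-1 * 0 + 0) with 0 in E by ring. replace (-1 * x + 0) with (- x) in E by ring.
  rewrite <- E. rewrite RInt_scal.
  rewrite (RInt_ext _ g). unfold scal; simpl; unfold mult; simpl. ring.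
  intros y _. rewrite Rplus_0_r. replace (-1 * y) with (- y) by ring. apply g_even.
  apply (ex_RInt_continuous (V:=R_CompleteNormedModule)). intros z _.
  apply (ex_derive_continuous (V := R_NormedModule)). unfold g. auto_derive. easy.
Qed.

Lemma G_nonneg x : 0 <= x -> 0 <= G x.
Proof. intros Hx. unfold G. apply RInt_ge_0. lra. apply ex_RInt_g. intros; unfold g; apply Rlt_le, exp_pos. Qed.

Definition mm := sqrt (PI / 2).

Lemma mm_sq : mm * mm = PI / 2.
Proof. unfold mm. apply sqrt_sqrt. pose proof PI2_RGT_0; lra. Qed.

Lemma mm_gt1 : 1 < mm.
Proof. pose proof mm_sq. pose proof PI2_1. assert (0 <= mm) by apply sqrt_pos. nra. Qed.

Lemma c_eq : sqrt (2 * PI) = 2 * mm.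
Proof.
  unfold mm. replace (2 * PI) with ((2 * 2) * (PI / 2)) by field.
  rewrite sqrt_mult. rewrite sqrt_square. reflexivity. lra. lra. pose proof PI2_RGT_0; lra.
Qed.

Lemma G_sq_lt x : G x * G x < mm * mm.
Proof. rewrite mm_sq. pose proof (F_const x). pose proof (H_pos x). simpl in H0. lra. Qed.

Lemma G_bound x : - mm < G x < mm.
Proof. pose proof (G_sq_lt x). pose proof mm_gt1. split; nra. Qed.

Lemma g_small s : g s * (1 + s ^ 2 / 2) <= 1.
Proof.
  unfold g. pose proof (exp_ineq1_le (s ^ 2 / 2)).
  replace (- s ^ 2 / 2) with (- (s ^ 2 / 2)) by (unfold Rdiv; ring).
  rewrite exp_Ropp. pose proof (exp_pos (s ^ 2 / 2)).
  apply Rmult_le_reg_l with (exp (s ^ 2 / 2)). lra.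
  rewrite <- Rmult_assoc, Rinv_r by lra. lra.
Qed.

Lemma tail eps : 0 < eps -> exists M, forall s, M < s -> Rabs (G s / (2 * mm) - 1 / 2) < eps.
Proof.
  intros He. exists (2 / eps + 1). intros s Hs.
  assert (H2e : 0 < 2 / eps) by (apply Rdiv_lt_0_compat; lra).
  assert (Hs0 : 0 <= s) by lra.
  pose proof (G_nonneg s Hs0) as G0. pose proof (G_bound s) as [_ Gm].
  pose proof (F_const s) as F. simpl in F. rewrite <- mm_sq in F.
  pose proof (H_le s). pose proof (H_pos s). pose proof (g_small s). pose proof mm_gt1.
  pose proof PI2_3_2. rewrite <- mm_sq in H4.
  assert (Hgs : 0 < g s) by apply exp_pos.
  assert (K1 : (mm - G s) * mm <= H s) by nra.
  assert (K2 : 0 <= mm - G s) by lra.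
  assert (K4 : 1 / eps < s ^ 2 / 2).
  { assert (2 / eps < s) by lra. assert (1 < s) by lra. 
    replace (1 / eps) with ((2/eps)/2) by (field; lra). simpl. nra. }
  assert (K5 : g s * (1 / eps) < 1) by nra.
  assert (K6 : g s < eps).
  { replace (g s) with (g s * (1/eps) * eps) by (field; lra). nra. }
  assert (K3 : (mm - G s) * mm < 2 * eps * mm * mm) by nra.
  assert (K7 : (mm - G s) < 2 * eps * mm) by nra.
  rewrite Rabs_left1.
  apply Rmult_lt_reg_r with (2 * mm). lra.
  replace (- (G s / (2 * mm) - 1 / 2) * (2 * mm)) with (mm - G s) by (field; lra). nra.
  apply Rmult_le_reg_r with (2 * mm). lra.
  replace ((G s / (2 * mm) - 1 / 2) * (2 * mm)) with (G s - mm) by (field; lra). lra.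
Qed.

Lemma phi_g t : phi_dens t = g t / (2 * mm).
Proof. unfold phi_dens, g. rewrite c_eq. reflexivity. Qed.

Lemma ex_RInt_phi a b : ex_RInt phi_dens a b.
Proof.
  apply (ex_RInt_continuous (V:=R_CompleteNormedModule)). intros z _.
  apply (ex_derive_continuous (V := R_NormedModule)). unfold phi_dens. auto_derive.
  pose proof (sqrt_lt_R0 _ Rgt_2PI_0). lra.
Qed.

Lemma RInt_phi a : RInt phi_dens 0 a = G a / (2 * mm).
Proof.
  unfold G. transitivity (scal (/ (2 * mm)) (RInt g 0 a)).
  rewrite <- (RInt_scal (V:=R_CompleteNormedModule)).
  apply RInt_ext. intros x _. rewrite phi_g. unfold scal; simpl; unfold mult; simpl.
  match goal with |- ?a = ?b => change (@eq R a b) end. unfold Rdiv; ring.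
  apply ex_RInt_g.
  unfold scal; simpl; unfold mult; simpl. 
  match goal with |- ?a = ?b => change (@eq R a b) end. unfold Rdiv; ring.
Qed.

Lemma Phi_eq x : Phi x = 1 / 2 + G x / (2 * mm).
Proof.
  unfold Phi. apply is_RInt_gen_unique.
  rewrite <- RInt_phi.
  change (1 / 2 + RInt phi_dens 0 x) with (plus (1/2) (RInt phi_dens 0 x)).
  apply (is_RInt_gen_Chasles (V:=R_NormedModule)) with (b := 0).
  - unfold is_RInt_gen, filterlimi, filter_le, filtermapi. intros P [eps HP].
    destruct (tail eps (cond_pos eps)) as [M HM].
    apply Filter_prod with (fun a => a < - M) (fun b => b = 0).
    + exists (- M). auto.
    + reflexivity.
    + intros a b Ha Hb. subst b. simpl. exists (RInt phi_dens a 0). split.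
      apply (RInt_correct (V:=R_CompleteNormedModule)), ex_RInt_phi.
      apply HP. 
      assert (E : RInt phi_dens a 0 = G (- a) / (2 * mm)).
      { rewrite <- (opp_RInt_swap (V:=R_CompleteNormedModule)) by apply ex_RInt_phi. rewrite RInt_phi, G_odd. 
        unfold opp; simpl. unfold Rdiv; ring. }
      rewrite E. unfold ball; simpl; unfold AbsRing_ball, abs, minus, plus, opp; simpl.
      apply HM. lra.
  - apply is_RInt_gen_at_point. apply (RInt_correct (V:=R_CompleteNormedModule)), ex_RInt_phi.
Qed.

Lemma Phi_deriv x : is_derive Phi x (phi_dens x).
Proof.
  apply is_derive_ext with (fun x => 1 / 2 + G x / (2 * mm)).
  intros; rewrite Phi_eq; reflexivity.
  rewrite phi_g. auto_derive. exists (g x). apply G_deriv.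
  replace (Derive (fun x0 : R => G x0) x) with (g x) by (symmetry; apply is_derive_unique, G_deriv).
  change RinvImpl.Rinv with Rinv. pose proof mm_gt1. field. lra.
Qed.

Lemma Phi_neg x : Phi (- x) = 1 - Phi x.
Proof. rewrite !Phi_eq, G_odd. pose proof mm_gt1. field. lra. Qed.

Lemma Phi_bounds x : 0 < Phi x < 1.
Proof.
  rewrite Phi_eq. pose proof (G_bound x). pose proof mm_gt1.
  split.
  - apply Rmult_lt_reg_r with (2 * mm). lra.
    replace ((1 / 2 + G x / (2 * mm)) * (2 * mm)) with (mm + G x) by (field; lra). lra.
  - apply Rmult_lt_reg_r with (2 * mm). lra.
    replace ((1 / 2 + G x / (2 * mm)) * (2 * mm)) with (mm + G x) by (field; lra). lra.
Qed.

Lemma Phi_half x : 0 <= x -> 1 / 2 <= Phi x.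
Proof.
  intros Hx. rewrite Phi_eq. pose proof (G_nonneg x Hx). pose proof mm_gt1.
  assert (0 <= G x / (2 * mm)) by (apply Rdiv_le_0_compat; lra). lra.
Qed.

Lemma Phi_0 : Phi 0 = 1 / 2.
Proof. rewrite Phi_eq, G_0. pose proof mm_gt1. field. lra. Qed.

Lemma sqrt2PI_pos : 0 < sqrt (2 * PI).
Proof. apply sqrt_lt_R0, Rgt_2PI_0. Qed.

Lemma phi_pos x : 0 < phi_dens x.
Proof. unfold phi_dens. apply Rdiv_lt_0_compat. apply exp_pos. apply sqrt2PI_pos. Qed.

Lemma Derive_Phi x : Derive (fun y => Phi y) x = phi_dens x.
Proof. apply is_derive_unique, Phi_deriv. Qed.

Lemma u_deriv Bs C : is_derive (u Bs) C (2 * C * Phi (- C)).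
Proof.
  unfold u. auto_derive.
  exists (phi_dens (- C)). apply Phi_deriv.
  rewrite Derive_Phi. unfold phi_dens. replace ((- C) ^ 2) with (C * (C * 1)) by ring.
  change RinvImpl.Rinv with Rinv. unfold Rdiv. pose proof sqrt2PI_pos. field. lra.
Qed.

Lemma v_deriv Bs C : is_derive (v Bs) C (phi_dens C * u Bs C / (Phi (- C)) ^ 2).
Proof.
  pose proof (Phi_bounds (- C)).
  unfold v. auto_derive.
  repeat split.
  exists (phi_dens (- C)). apply Phi_deriv.
  lra.
  exists (phi_dens C). apply Phi_deriv.
  rewrite !Derive_Phi. unfold u, phi_dens. replace ((- C) ^ 2) with (C * (C * 1)) by ring.
  replace (C ^ 2) with (C * (C * 1)) by ring.
  replace (Phi C) with (1 - Phi (- C)) by (rewrite Phi_neg; ring).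
  change RinvImpl.Rinv with Rinv. unfold Rdiv. pose proof sqrt2PI_pos. field. lra.
Qed.

Lemma incr_strict (f f' : R -> R) a b : a < b -> (forall x, a <= x <= b -> is_derive f x (f' x)) ->
  (forall x, a < x < b -> 0 < f' x) -> f a < f b.
Proof.
  intros Hab Hd Hp. destruct (MVT_cor2 f f' a b Hab) as [c [Hc Hc2]].
  intros c Hc. apply is_derive_Reals, Hd; lra.
  pose proof (Hp c Hc2). nra.
Qed.

Lemma decr_strict (f f' : R -> R) a b : a < b -> (forall x, a <= x <= b -> is_derive f x (f' x)) ->
  (forall x, a < x < b -> f' x < 0) -> f b < f a.
Proof.
  intros Hab Hd Hp. destruct (MVT_cor2 f f' a b Hab) as [c [Hc Hc2]].
  intros c Hc. apply is_derive_Reals, Hd; lra.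
  pose proof (Hp c Hc2). nra.
Qed.

Lemma u_decr Bs x y : x < y -> y <= 0 -> u Bs y < u Bs x.
Proof.
  intros. apply (decr_strict _ (fun C => 2 * C * Phi (- C))). lra.
  intros; apply u_deriv. intros z Hz. pose proof (Phi_bounds (- z)). nra.
Qed.

Lemma u_incr Bs x y : 0 <= x -> x < y -> u Bs x < u Bs y.
Proof.
  intros. apply (incr_strict _ (fun C => 2 * C * Phi (- C))). lra.
  intros; apply u_deriv. intros z Hz. pose proof (Phi_bounds (- z)). nra.
Qed.

Definition gB (x : R) : R := (1 - x ^ 2) * Phi x - x * phi_dens x.

Lemma gB_deriv x : is_derive gB x (- 2 * x * Phi x).
Proof.
  unfold gB, phi_dens. auto_derive.
  exists (phi_dens x). apply Phi_deriv.
  rewrite Derive_Phi. unfold phi_dens. 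
  change RinvImpl.Rinv with Rinv. unfold Rdiv. pose proof sqrt2PI_pos.
  replace (x ^ 2) with (x * (x * 1)) by ring. field. lra.
Qed.

Lemma u_at_B Bs : u Bs Bs = gB Bs.
Proof.
  unfold u, gB, phi_dens. rewrite Phi_neg. unfold Rdiv. ring.
Qed.

Lemma Beq_g Bs : Bstar_eq Bs -> gB Bs = 0.
Proof.
  unfold Bstar_eq, gB, phi_dens. intros E. pose proof sqrt2PI_pos.
  assert (X : exp (Bs ^ 2 / 2) * exp (- Bs ^ 2 / 2) = 1).
  { rewrite <- exp_plus. replace (Bs ^ 2 / 2 + - Bs ^ 2 / 2) with 0 by (unfold Rdiv; ring). apply exp_0. }
  apply Rmult_eq_reg_l with (sqrt (2 * PI) * exp (Bs ^ 2 / 2)).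
  2: { pose proof (exp_pos (Bs ^ 2 / 2)). nra. }
  rewrite Rmult_0_r.
  transitivity (sqrt (2 * PI) * (1 - Bs ^ 2) * exp (Bs ^ 2 / 2) * Phi Bs - Bs * (exp (Bs ^ 2 / 2) * exp (- Bs ^ 2 / 2))).
  field. lra. rewrite X, E. ring.
Qed.

Lemma exp_quarter : exp (1 / 4) > 5 / 4.
Proof. pose proof (exp_ineq1 (1/4)). lra. Qed.

Lemma gB_c0_pos : 0 < gB (sqrt (/ 2)).
Proof.
  set (c0 := sqrt (/ 2)).
  assert (Hc0 : c0 * c0 = / 2) by (apply sqrt_sqrt; lra).
  assert (Hc0p : 0 < c0) by (apply sqrt_lt_R0; lra).
  assert (Hc0l : c0 < 71 / 100) by nra.
  set (s := sqrt (2 * PI)).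
  assert (Hs : s * s = 2 * PI) by (apply sqrt_sqrt; pose proof Rgt_2PI_0; lra).
  assert (Hsp : 0 < s) by apply sqrt2PI_pos.
  pose proof PI2_3_2.
  assert (Hsl : 244 / 100 < s) by nra.
  assert (He : exp (- c0 ^ 2 / 2) < 4 / 5).
  { replace (- c0 ^ 2 / 2) with (- (1 / 4)) by (simpl; rewrite Rmult_1_r, Hc0; field).
    rewrite exp_Ropp. pose proof exp_quarter. pose proof (exp_pos (1/4)).
    apply Rmult_lt_reg_l with (exp (1/4)). lra. rewrite Rinv_r by lra. lra. }
  pose proof (exp_pos (- c0 ^ 2 / 2)).
  assert (Hphi : c0 * phi_dens c0 < 1 / 4).
  { unfold phi_dens. fold s. apply Rmult_lt_reg_r with s. lra.
    replace (c0 * (exp (- c0 ^ 2 / 2) / s) * s) with (c0 * exp (- c0 ^ 2 / 2)) by (field; lra).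
    nra. }
  unfold gB. pose proof (Phi_half c0 (Rlt_le _ _ Hc0p)).
  replace (c0 ^ 2) with (/ 2) by (simpl; rewrite Rmult_1_r; auto). lra.
Qed.

Lemma Bs_sq Bs : 0 < Bs -> Bstar_eq Bs -> / 2 < Bs * Bs.
Proof.
  intros Hp He. apply Beq_g in He.
  destruct (Rlt_or_le (/ 2) (Bs * Bs)) as [h|h]. auto.
  exfalso.
  set (c0 := sqrt (/ 2)).
  assert (Hc0 : c0 * c0 = / 2) by (apply sqrt_sqrt; lra).
  assert (Hc0p : 0 < c0) by (apply sqrt_lt_R0; lra).
  assert (Hle : Bs <= c0) by nra.
  pose proof gB_c0_pos as Hgc. fold c0 in Hgc.
  destruct (Req_dec Bs c0) as [e|ne]. rewrite e in He. lra.
  assert (gB c0 < gB Bs).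
  { apply (decr_strict _ (fun x => - 2 * x * Phi x)). lra. intros; apply gB_deriv.
    intros z Hz. pose proof (Phi_bounds z). nra. }
  lra.
Qed.

Lemma u_cont Bs : continuity (u Bs).
Proof.
  intros x. apply derivable_continuous_pt.
  exists (2 * x * Phi (- x)). apply is_derive_Reals, u_deriv.
Qed.

Theorem lemma3p1 (Bs : R)
  (HBpos : 0 < Bs) (HBeq : Bstar_eq Bs)
  (HBuniq : forall B, 0 < B -> Bstar_eq B -> B = Bs) :
  exists Cs : R,
    (Cs < 0 /\ u Bs Cs = 0 /\ (forall C, C < 0 -> u Bs C = 0 -> C = Cs)) /\
    (Cs <= Bs /\ forall C, C <= Bs -> C <> Cs -> v Bs C < v Bs Cs).
Proof.
  pose proof (Bs_sq Bs HBpos HBeq) as Hsq.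
  pose proof (Beq_g Bs HBeq) as Hg.
  assert (HB1 : Bs < 1).
  { unfold gB in Hg. pose proof (Phi_bounds Bs). pose proof (phi_pos Bs).
    assert (0 < Bs * phi_dens Bs) by (apply Rmult_lt_0_compat; auto).
    assert (0 < (1 - Bs ^ 2) * Phi Bs) by lra.
    assert (0 < 1 - Bs ^ 2).
    { destruct (Rlt_or_le 0 (1 - Bs ^ 2)) as [h|h]; auto.
      assert ((1 - Bs ^ 2) * Phi Bs <= 0) by (apply Rmult_le_0_r; lra). lra. }
    simpl in H3. nra. }
  assert (Hu0 : u Bs 0 < 0).
  { unfold u. rewrite Ropp_0, Phi_0. simpl. unfold Rdiv. rewrite Rmult_0_l, Rmult_0_l. nra. }
  assert (Hu2 : 0 < u Bs (-2)).
  { unfold u. replace (- -2) with 2 by ring. pose proof (Phi_half 2 ltac:(lra)).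
    assert (0 < exp (- (-2) ^ 2 / 2) / sqrt (2 * PI)) by (apply Rdiv_lt_0_compat; [apply exp_pos|apply sqrt2PI_pos]).
    replace (-2 / sqrt (2 * PI) * exp (- (-2) ^ 2 / 2)) with (-2 * (exp (- (-2) ^ 2 / 2) / sqrt (2 * PI))) by (unfold Rdiv; ring).
    set (q := exp (- (-2) ^ 2 / 2) / sqrt (2 * PI)) in *. replace ((-2) ^ 2) with 4 by ring. nra. }
  destruct (IVT (fun C => - u Bs C) (-2) 0) as [Cs [HCs HuCs]].
  { intros x. apply continuity_pt_opp, u_cont. }
  lra. lra. lra.
  assert (HuCs' : u Bs Cs = 0) by lra. clear HuCs.
  assert (HCsn : Cs < 0).
  { destruct (Req_dec Cs 0) as [e|ne]. subst. lra. lra. }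
  assert (Hpos : forall x, x < Cs -> 0 < u Bs x).
  { intros x Hx. rewrite <- HuCs'. apply u_decr; lra. }
  assert (Hneg : forall x, Cs < x < Bs -> u Bs x < 0).
  { intros x Hx. destruct (Rlt_or_le x 0) as [h|h].
    rewrite <- HuCs'. apply u_decr; lra.
    rewrite <- Hg, <- u_at_B. apply u_incr; lra. }
  exists Cs. split; [split; [exact HCsn | split; [exact HuCs'|]] | split].
  - intros C HC HuC. destruct (Rtotal_order C Cs) as [h|[h|h]]; auto.
    pose proof (Hpos C h). lra.
    pose proof (u_decr Bs Cs C h (Rlt_le _ _ HC)). lra.
  - lra.
  - intros C HC Hne. destruct (Rtotal_order C Cs) as [h|[h|h]]; [| contradiction |].
    + apply (incr_strict _ (fun C => phi_dens C * u Bs C / (Phi (- C)) ^ 2)). auto.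
      intros; apply v_deriv.
      intros z Hz. pose proof (phi_pos z). pose proof (Hpos z (proj2 Hz)).
      pose proof (Phi_bounds (- z)). apply Rdiv_lt_0_compat. nra. nra.
    + apply (decr_strict _ (fun C => phi_dens C * u Bs C / (Phi (- C)) ^ 2)). auto.
      intros; apply v_deriv.
      intros z Hz. pose proof (phi_pos z). pose proof (Hneg z ltac:(lra)).
      pose proof (Phi_bounds (- z)). unfold Rdiv.
      assert (0 < / Phi (- z) ^ 2) by (apply Rinv_0_lt_compat; nra).
      assert (phi_dens z * u Bs z < 0) by nra. nra.
Qed.
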